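(* For an integer $r\ge 5$, let $freq_r(\mathrm{FL})$ and $freq_r(\mathrm{1P})$ denote the number of $7$-card subsets of the $4r$-card deck (defined in the context) that contain a flush, respectively a one-pair hand. Then: (i) there exists $N$ such that $freq_r(\mathrm{FL}) > freq_r(\mathrm{1P})$ for all $r \ge N$ (flushes eventually rank below one-pair hands in the frequency ranking); and (ii) if $r\ge 5$ and $freq_r(\mathrm{FL}) > freq_r(\mathrm{1P})$, then $r \ge 307$.
   Context: Fix an integer $r\ge 5$. The deck has $4r$ cards: each card has one of $4$ suits and one of $r$ ranks $1,2,\dots,r$, each (suit, rank) pair occurring exactly once. Let $S_r$ be the set of all $7$-card subsets of this deck (so $|S_r|=\binom{4r}{7}$). A $5$-card set is a flush (FL) if all five cards have the same suit. A $5$-card set contains a one-pair (1P) if two of its cards have the same rank. For a hand type $h$ and $s\in S_r$, say $h\in s$ if some $5$-card subset of $s$ is of type $h$ (counting is inclusive: a $5$-card set may be of several types simultaneously). Define $freq_r(h)=|\{s\in S_r : h\in s\}|$. The frequency ranking places type $h_0$ above $h_1$ exactly when $freq_r(h_0)<freq_r(h_1)$. *)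

(* Defs.v *)
From mathcomp Require Import all_boot.
Set Implicit Arguments. Unset Strict Implicit. Unset Printing Implicit Defensive.

(* A card of the 4r-card deck: (suit, rank); suits 'I_4, ranks 'I_r
   (rank i : 'I_r stands for the rank i+1 in {1,...,r}). *)
Definition card (r : nat) : finType := ('I_4 * 'I_r)%type.

Definition is_flush (r : nat) (h : {set card r}) : bool :=
  (#|h| == 5) && [exists su : 'I_4, [forall c in h, c.1 == su]].

Definition is_onepair (r : nat) (h : {set card r}) : bool :=
  (#|h| == 5) &&
  [exists c1 in h, exists c2 in h, (c1 != c2) && (c1.2 == c2.2)].

Definition has_type (r : nat) (P : {set card r} -> bool) (s : {set card r}) : bool :=
  [exists h : {set card r}, (h \subset s) && P h].

Definition freq (r : nat) (P : {set card r} -> bool) : nat :=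
  #|[set s : {set card r} | (#|s| == 7) && has_type P s]|.

Definition freqFL (r : nat) : nat := freq (@is_flush r).
Definition freq1P (r : nat) : nat := freq (@is_onepair r).

(* Main.v *)
Require Import Defs.
From mathcomp Require Import all_boot zify.
From Stdlib Require Import ZArith Lia.
Set Implicit Arguments. Unset Strict Implicit. Unset Printing Implicit Defensive.
Lemma card_disj (I T : finType) (P : I -> T -> bool) :
  (forall x i j, P i x -> P j x -> i = j) ->
  #|[set x | [exists i, P i x]]| = \sum_i #|[set x | P i x]|.
Proof.
move=> uniqP.
rewrite -(sum1dep_card (fun x => [exists i, P i x])).
symmetry.
under eq_bigr => i _ do rewrite -(sum1dep_card (P i)).
rewrite (exchange_big_dep (fun x => [exists i, P i x])) /=; last first.
  by move=> i x _ Pix; apply/existsP; exists i.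
apply: eq_bigr => x /existsP [i Pix].
rewrite (big_pred1 i) // => j /=.
by apply/idP/eqP => [Pjx| ->//]; exact: uniqP Pjx Pix.
Qed.
Lemma split_help (T : finType) (A B C : {set T}) :
  B \subset A -> C \subset ~: A ->
  [/\ (B :|: C) :&: A = B, (B :|: C) :\: A = C & B :&: C = set0].
Proof.
move=> /subsetP BA /subsetP CA; split; apply/setP => x; rewrite !inE.
- case xB: (x \in B); first by rewrite (BA x xB).
  by case xC: (x \in C) => //=; have := CA x xC; rewrite inE => /negbTE ->.
- case xC: (x \in C); first by have := CA x xC; rewrite inE => ->; rewrite orbT.
  by rewrite orbF andbC; case xB: (x \in B) => //; rewrite (BA x xB).
- case xB: (x \in B) => //=; case xC: (x \in C) => //.
  by have := CA x xC; rewrite inE (BA x xB).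
Qed.

Lemma card_split (T : finType) (A : {set T}) n k : k <= n ->
  #|[set s : {set T} | (#|s| == n) && (#|s :&: A| == k)]| =
  'C(#|A|, k) * 'C(#|~:A|, n - k).
Proof.
move=> kn.
set X := [set B : {set T} | B \subset A & #|B| == k].
set Y := [set B : {set T} | B \subset ~:A & #|B| == n - k].
rewrite -(cards_draws A k) -(cards_draws (~:A) (n-k)) -/X -/Y -cardsX.
have -> : [set s : {set T} | (#|s| == n) && (#|s :&: A| == k)] =
    (fun p : {set T} * {set T} => p.1 :|: p.2) @: setX X Y.
  apply/setP => s; rewrite inE; apply/andP/imsetP.
  - case=> /eqP sn /eqP sk; exists (s :&: A, s :\: A); last by rewrite setID.
    rewrite inE /= !inE subsetIr sk eqxx /=.
    have := cardsID A s; rewrite sk sn => <-.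
    rewrite addKn eqxx andbT; apply/subsetP => x; rewrite !inE.
    by case/andP.
  - case=> -[B C]; rewrite in_setX !inE => /andP[/andP[BA /eqP Bk] /andP[CA /eqP Ck]] ->.
    have [h1 _ h3] := split_help BA CA.
    by rewrite h1 Bk eqxx cardsU h3 cards0 subn0 Bk Ck subnKC.
apply: card_in_imset => -[B C] [B' C']; rewrite !in_setX /X /Y !inE.
move=> /andP[/andP[BA _] /andP[CA _]] /andP[/andP[BA' _] /andP[CA' _]] /= E.
have [h1 h2 _] := split_help BA CA.
have [h1' h2' _] := split_help BA' CA'.
by congr (_, _); [rewrite -h1 E h1' | rewrite -h2 E h2'].
Qed.

Lemma exists_sub (T : finType) (A : {set T}) k : k <= #|A| ->
  exists2 B : {set T}, B \subset A & #|B| = k.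
Proof.
move=> kA.
have : 0 < #|[set B : {set T} | B \subset A & #|B| == k]|.
  by rewrite cards_draws bin_gt0.
by case/card_gt0P => B; rewrite inE => /andP [BA /eqP Bk]; exists B.
Qed.

Definition suitset r (su : 'I_4) : {set Defs.card r} := setX [set su] [set: 'I_r].

Lemma card_suit r su : #|suitset r su| = r.
Proof. by rewrite cardsX cards1 cardsT card_ord mul1n. Qed.

Lemma card_suitC r su : #|~: suitset r su| = 3 * r.
Proof.
have := cardsC (suitset r su); rewrite card_suit /Defs.card card_prod !card_ord => H.
by rewrite -[3]/(4 - 1) mulnBl mul1n -H addKn.
Qed.

Lemma hasFL r (s : {set Defs.card r}) : #|s| = 7 ->
  has_type (@is_flush r) s = [exists su, 5 <= #|s :&: suitset r su|].
Proof.
move=> s7; apply/existsP/existsP.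
- case=> h /andP[hs /andP[/eqP h5 /existsP[su /forallP hsu]]]; exists su.
  rewrite -h5 subset_leq_card //; apply/subsetP => c ch.
  rewrite !inE (subsetP hs c ch) /=.
  by have := hsu c; rewrite ch /= => /eqP ->; rewrite eqxx.
- case=> su H; have [B BS B5] := exists_sub H; exists B.
  rewrite (subset_trans BS (subsetIl _ _)) /is_flush B5 eqxx /=.
  apply/existsP; exists su; apply/forallP => c; apply/implyP => cB.
  by have := subsetP BS c cB; rewrite !inE => /andP[_ /andP[]].
Qed.

Lemma has1P r (s : {set Defs.card r}) : #|s| = 7 ->
  has_type (@is_onepair r) s =
  [exists c1 in s, exists c2 in s, (c1 != c2) && (c1.2 == c2.2)].
Proof.
move=> s7; apply/existsP/idP.
- case=> h /andP[hs /andP[_ /existsP[c1 /andP[c1h /existsP[c2 /andP[c2h H]]]]]].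
  apply/existsP; exists c1; rewrite (subsetP hs c1 c1h) /=.
  by apply/existsP; exists c2; rewrite (subsetP hs c2 c2h).
- case/existsP=> c1 /andP[c1s /existsP[c2 /andP[c2s /andP[ne eq2]]]].
  have H : 3 <= #|s :\ c1 :\ c2|.
    have := cardsD1 c1 s; rewrite c1s s7 => /eqP; rewrite eqSS => /eqP H6.
    have := cardsD1 c2 (s :\ c1); rewrite !inE eq_sym ne c2s -H6 /=.
    by move=> /eqP; rewrite eqSS => /eqP <-.
  have [B BS B3] := exists_sub H.
  exists (c1 |: (c2 |: B)); apply/andP; split.
    apply/subsetP => c; rewrite !inE => /or3P[/eqP->|/eqP->|cB] //.
    by have := subsetP BS c cB; rewrite !inE => /and3P[].
  have c2B : c2 \notin B by apply/negP => /(subsetP BS); rewrite !inE eqxx.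
  have c1B : c1 \notin c2 |: B.
    rewrite !inE negb_or ne /=; apply/negP => /(subsetP BS).
    by rewrite !inE eqxx andbF.
  rewrite /is_onepair !cardsU1 c1B c2B B3 /=.
  apply/existsP; exists c1; rewrite !inE eqxx /=.
  by apply/existsP; exists c2; rewrite !inE eqxx orbT ne eq2.
Qed.

Lemma freqFL_eq r : freqFL r = 4 * ('C(r,5) * 'C(3*r,2) + 'C(r,6) * 'C(3*r,1) + 'C(r,7) * 'C(3*r,0)).
Proof.
rewrite /freqFL /freq.
have -> : [set s : {set Defs.card r} | (#|s| == 7) && has_type (@is_flush r) s] =
   [set s : {set Defs.card r} | [exists su : 'I_4, (#|s| == 7) && (5 <= #|s :&: suitset r su|)]].
  apply/setP => s; rewrite !inE.
  case s7: (#|s| == 7) => /=; last by apply/esym/negbTE/existsPn.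
  by rewrite (hasFL (eqP s7)).
rewrite card_disj; last first.
  move=> s su su' /andP[/eqP s7 H1] /andP[_ H2]; apply/eqP/negPn/negP => ne.
  set X := s :&: suitset r su in H1; set Y := s :&: suitset r su' in H2.
  have XY : X :&: Y = set0.
    apply/setP => -[a i]; rewrite !inE /=.
    apply/negP => /andP[/andP[_ /andP[/eqP -> _]] /andP[_ /andP[/eqP E _]]].
    by rewrite E eqxx in ne.
  have : #|X :|: Y| <= 7.
    rewrite -s7; apply: subset_leq_card; rewrite subUset !subsetIl //.
  rewrite cardsU XY cards0 subn0.
  by move=> H; have := leq_add H1 H2; move/leq_trans => /(_ _ H).
have E su : #|[set s : {set Defs.card r} | (#|s| == 7) && (5 <= #|s :&: suitset r su|)]| =
   'C(r,5) * 'C(3*r,2) + 'C(r,6) * 'C(3*r,1) + 'C(r,7) * 'C(3*r,0).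
  have -> : [set s : {set Defs.card r} | (#|s| == 7) && (5 <= #|s :&: suitset r su|)] =
     [set s : {set Defs.card r} | [exists k : 'I_3, (#|s| == 7) && (#|s :&: suitset r su| == k + 5)]].
    apply/setP => s; rewrite !inE.
    case s7: (#|s| == 7) => /=; last by apply/esym/negbTE/existsPn.
    apply/idP/existsP => [H|[k /eqP ->]]; last by rewrite leq_addl.
    have Hle : #|s :&: suitset r su| <= 7 by rewrite -(eqP s7) subset_leq_card // subsetIl.
    have Hk : #|s :&: suitset r su| - 5 < 3 by rewrite ltn_subLR.
    by exists (Ordinal Hk); rewrite /= subnK.
  rewrite card_disj; last first.
    by move=> s k k' /andP[_ /eqP ->] /andP[_]; rewrite eqn_add2r => /eqP /val_inj.
  rewrite !big_ord_recr big_ord0 /= !card_split // card_suit card_suitC.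
  by rewrite add0n.
under eq_bigr => su _ do rewrite E.
by rewrite big_const_ord /= !mulSn mul0n !addn0.
Qed.

Section OneP.
Variable r : nat.
Notation C := (Defs.card r).
Definition Q (s : {set C}) := [exists c1 in s, exists c2 in s, (c1 != c2) && (c1.2 == c2.2)].

Lemma notQ (s : {set C}) : ~~ Q s ->
  forall c1 c2, c1 \in s -> c2 \in s -> c1.2 = c2.2 -> c1 = c2.
Proof.
move=> nQ c1 c2 c1s c2s e; apply/eqP; apply: contraNT nQ => ne.
apply/existsP; exists c1; rewrite c1s /=; apply/existsP; exists c2.
by rewrite c2s ne e eqxx.
Qed.

Definition g (f : {ffun 'I_r -> option 'I_4}) : {set C} :=
  [set c : C | f c.2 == Some c.1].

Lemma g_inj : injective g.
Proof.
move=> f f' E; apply/ffunP => i.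
case Ef: (f i) => [su|].
  have : (su, i) \in g f by rewrite inE /= Ef.
  by rewrite E inE /= => /eqP.
case Ef': (f' i) => [su'|] //.
have : (su', i) \in g f' by rewrite inE /= Ef'.
by rewrite -E inE /= Ef.
Qed.

Lemma g_uniq f c1 c2 : c1 \in g f -> c2 \in g f -> c1.2 = c2.2 -> c1 = c2.
Proof.
case: c1 c2 => [a i] [b j]; rewrite !inE /= => /eqP E1 /eqP E2 eij.
by subst j; rewrite E1 in E2; case: E2 => ->.
Qed.

Lemma card_g f : #|g f| = #|[set i | f i != None]|.
Proof.
have -> : [set i | f i != None] = (fun c : C => c.2) @: g f.
  apply/setP => i; rewrite inE; apply/idP/imsetP.
    case Ef: (f i) => [su|] // _; exists (su, i) => //.
    by rewrite inE /= Ef.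
  by case=> c; rewrite inE => /eqP E ->; rewrite E.
rewrite card_in_imset //. move=> c1 c2 h1 h2 e. exact: (g_uniq h1 h2 e).
Qed.

Definition F7 := [set f : {ffun 'I_r -> option 'I_4} | #|[set i | f i != None]| == 7].

Lemma Sinj_eq : [set s : {set C} | (#|s| == 7) && ~~ Q s] = g @: F7.
Proof.
apply/setP => s; rewrite inE; apply/andP/imsetP.
- case=> /eqP s7 nQ.
  pose f := [ffun i => [pick su | (su, i) \in s]].
  have gf : g f = s.
    apply/setP => -[su i]; rewrite inE /= ffunE.
    case: pickP => [su' H | H].
      apply/eqP/idP => [[<-] //|Hs].
      by have := notQ nQ H Hs erefl => -[->].
    by rewrite H.
  exists f => //; rewrite inE -card_g gf s7 //.
- case=> f; rewrite inE => /eqP H ->; split; first by rewrite card_g H.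
  apply/negP => /existsP [c1 /andP[c1s /existsP[c2 /andP[c2s /andP[ne /eqP e]]]]].
  by rewrite (g_uniq c1s c2s e) eqxx in ne.
Qed.

Lemma pf_supp (f : {ffun 'I_r -> option 'I_4}) (D : {set 'I_r}) :
  (f \in pffun_on None D (predC1 None)) = (D == [set i | f i != None]).
Proof.
apply/pffun_onP/eqP.
- case=> /subsetP sD iR; apply/setP => i; rewrite inE.
  apply/idP/idP => [iD|fi]; last exact: sD.
  by have := iR (f i) (image_f f iD).
- move=> ->; split; first by apply/subsetP => i; rewrite !inE.
  by move=> o /imageP [i]; rewrite inE => fi ->.
Qed.

Lemma card_F7 : #|F7| = 'C(r, 7) * 4 ^ 7.
Proof.
have -> : F7 = [set f | [exists D : {set 'I_r}, (#|D| == 7) && (f \in pffun_on None D (predC1 None))]].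
  apply/setP => f; rewrite !inE; apply/idP/existsP => [H|[D /andP[/eqP D7]]].
    by exists [set i | f i != None]; rewrite H pf_supp eqxx.
  by rewrite pf_supp => /eqP <-; rewrite D7.
rewrite card_disj; last first.
  by move=> f D D' /andP[_]; rewrite pf_supp => /eqP -> /andP[_]; rewrite pf_supp => /eqP.
rewrite (eq_bigr (fun D : {set 'I_r} => if #|D| == 7 then 4 ^ 7 else 0)); last first.
  move=> D _; case: ifP => D7 /=.
    by rewrite cardsE card_pffun_on cardC1 card_option card_ord (eqP D7).
  by apply: eq_card0 => f; rewrite inE.
by rewrite -big_mkcond sum_nat_cond_const card_draws card_ord.
Qed.

End OneP.

Lemma freq1P_eq r : freq1P r + 'C(r, 7) * 4 ^ 7 = 'C(4 * r, 7).
Proof.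
rewrite -(card_F7 r) -(card_imset _ (@g_inj r)) -Sinj_eq.
have -> : 'C(4 * r, 7) = #|[set s : {set Defs.card r} | #|s| == 7]|.
  by rewrite card_draws /Defs.card card_prod !card_ord.
rewrite -(cardsID [set s : {set Defs.card r} | Q s] [set s : {set Defs.card r} | #|s| == 7]) /freq1P /freq.
congr (_ + _); apply: eq_card => s; rewrite !inE.
  by case s7: (#|s| == 7) => //=; rewrite (has1P (eqP s7)).
by rewrite andbC.
Qed.
Fixpoint fz (x : Z) (k : nat) : Z :=
  match k with 0 => 1%Z | S k => (fz x k * (x - Z.of_nat k))%Z end.

Lemma ffZ n k : Z.of_nat (n ^_ k) = fz (Z.of_nat n) k.
Proof.
elim: k => [|k IH]; first by rewrite ffactn0.
rewrite ffactnSr /= -IH.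
case: (leqP k n) => h.
  rewrite Nat2Z.inj_mul Nat2Z.inj_sub //; exact/leP.
by rewrite ffact_small // mul0n.
Qed.

Lemma crit_nat_Z (A B : nat) : (A < B) <-> (Z.of_nat A < Z.of_nat B)%Z.
Proof. split => H. apply Nat2Z.inj_lt; exact/ltP. apply/ltP; apply Nat2Z.inj_lt; exact H. Qed.
Definition Qz (x : Z) : Z :=
  (16384 * fz x 7 + 4 * (21 * fz x 5 * fz (3 * x) 2 + 21 * fz x 6 * x + fz x 7) - fz (4 * x) 7)%Z.

Lemma critZK r K : Z.of_nat K = 16384%Z ->
  ((4*r)^_7 < K * r^_7 + 4 * (21 * r^_5 * (3*r)^_2 + 21 * r^_6 * r + r^_7)) <->
  (0 < Qz (Z.of_nat r))%Z.
Proof.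
move=> HK.
rewrite crit_nat_Z /Qz.
move: ((4*r)^_7) (ffZ (4*r) 7) => a ea.
move: (r^_7) (ffZ r 7) => b eb.
move: (r^_5) (ffZ r 5) => c ec.
move: ((3*r)^_2) (ffZ (3*r) 2) => d ed.
move: (r^_6) (ffZ r 6) => e ee.
rewrite !Nat2Z.inj_add !Nat2Z.inj_mul HK ea eb ec ed ee.
rewrite !Nat2Z.inj_mul.
change (Z.of_nat 4) with 4%Z; change (Z.of_nat 3) with 3%Z.
change (Z.of_nat 21) with 21%Z; change (Z.of_nat 0) with 0%Z.
lia.
Qed.

Lemma crit_nat r K : K = 4 ^ 7 -> (freq1P r < freqFL r) =
  ((4*r)^_7 < K * r^_7 + 4 * (21 * r^_5 * (3*r)^_2 + 21 * r^_6 * r + r^_7)).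
Proof.
move=> HK.
rewrite -(ltn_add2r ('C(r,7) * 4^7)) freq1P_eq freqFL_eq -HK -(ltn_pmul2l (fact_gt0 7)).
rewrite -!bin_ffact bin1 bin0.
have f7 : 7`! = 7 * 720 by []. have f6 : 6`! = 720 by []. have f5 : 5`! = 120 by [].
have f2 : 2`! = 2 by [].
rewrite f7 f6 f5 f2.
move: ('C(4*r,7)) ('C(r,7)) ('C(r,6)) ('C(r,5)) ('C(3*r,2)) => a b c d e.
apply/idP/idP => H; lia.
Qed.

Lemma horner_nn (a p t : Z) : (0 <= a)%Z -> (0 <= t)%Z -> (0 <= p)%Z -> (0 <= a + t * p)%Z.
Proof. move=> ha ht hp; have := Z.mul_nonneg_nonneg _ _ ht hp; lia. Qed.

Lemma Qz_pos t : (0 <= t)%Z -> (0 < Qz (307 + t))%Z.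
Proof.
move=> ht.
have -> : Qz (307 + t) = (547571597073056640 + t * (693778441961310912 + t * (13512699882631768 + t * (110325621128716 + t * (481138475440 + t * (1181004328 + t * (1546552 + t * 844)))))))%Z.
  rewrite /Qz. cbn [fz Z.of_nat Pos.of_succ_nat Pos.succ]. ring.
have : (0 <= t * (693778441961310912 + t * (13512699882631768 + t * (110325621128716 + t * (481138475440 + t * (1181004328 + t * (1546552 + t * 844)))))))%Z.
  apply Z.mul_nonneg_nonneg; first exact ht.
  do 5 (apply horner_nn; [lia | exact ht | idtac]).
  apply horner_nn; lia.
lia.
Qed.

Lemma small_check :
  List.forallb (fun n => (Qz (Z.of_nat n) <=? 0)%Z) (List.seq 5 302) = true.
Proof. vm_compute. reflexivity. Qed.

Lemma K47 : Z.of_nat (4 ^ 7) = 16384%Z.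
Proof. by []. Qed.

Theorem fact1 :
  (exists N : nat, forall r : nat, N <= r -> freq1P r < freqFL r) /\
  (forall r : nat, 5 <= r -> freq1P r < freqFL r -> 307 <= r).
Proof.
split.
  exists 307 => r hr.
  rewrite (crit_nat r (erefl _)); apply/(critZK r K47).
  have -> : Z.of_nat r = (307 + (Z.of_nat r - 307))%Z by lia.
  apply: Qz_pos; lia.
move=> r h5 H.
rewrite (crit_nat r (erefl _)) in H; move/(critZK r K47): H => H.
case: (leqP 307 r) => // hlt.
have := small_check.
move/List.forallb_forall => /(_ r).
have Hin : List.In r (List.seq 5 302) by apply/List.in_seq; lia.
move=> /(_ Hin) /Z.leb_le; lia.
Qed.
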